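(* Let $a=(a_1,\dots,a_m)$ be a composition with $a_m=2$, and let $a'=(a_1,\dots,a_{m-1},1,1)$. Then for every $n\ge 0$, the number of compositions of size $n$ that dominate $a$ equals the number of compositions of size $n$ that dominate $a'$.
   Context: A composition is a finite sequence of positive integers; its size is the sum of its components. A composition $b=(b_1,\dots,b_k)$ dominates $a=(a_1,\dots,a_m)$ if there are indices $1\le i(1)<i(2)<\dots<i(m)\le k$ with $a_j\le b_{i(j)}$ for every $j\in[m]$. *)

(* Defs.v *)
From mathcomp Require Import all_boot.
Set Implicit Arguments. Unset Strict Implicit. Unset Printing Implicit Defensive.

(* A composition: finite sequence of positive integers; its size is sumn. *)
Definition is_composition (s : seq nat) : bool := all (fun x => 0 < x) s.

(* b dominates a: there are indices i(1) < ... < i(m) in b with a_j <= b_{i(j)}.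
   Indices are 0-based here: a strictly increasing map f : 'I_(size a) -> 'I_(size b). *)
Definition dominates (b a : seq nat) : bool :=
  [exists f : {ffun 'I_(size a) -> 'I_(size b)},
    [forall j1 : 'I_(size a), forall j2 : 'I_(size a), (j1 < j2) ==> (f j1 < f j2)] &&
    [forall j : 'I_(size a), nth 0 a j <= nth 0 b (f j)]].

(* words_len L n : all sequences of length L with entries in {1,...,n}
   (a finite duplicate-free candidate list, used only to count). *)
Fixpoint words_len (L n : nat) : seq (seq nat) :=
  match L with
  | 0 => [:: [::]]
  | L'.+1 => [seq x :: w | x <- iota 1 n, w <- words_len L' n]
  end.

(* All sequences of length <= n with entries in {1..n}; every composition of
   size n is among them, exactly once. *)
Definition cands (n : nat) : seq (seq nat) :=
  flatten [seq words_len L n | L <- iota 0 n.+1].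

Definition num_dominating (n : nat) (a : seq nat) : nat :=
  count (fun b => [&& is_composition b, sumn b == n &
                      dominates b a]) (cands n).

(* Main.v *)
Require Import Defs.
From mathcomp Require Import all_boot zify.

Fixpoint dom (b a : seq nat) {struct b} : bool :=
  match a with
  | [::] => true
  | x :: a' => match b with
               | [::] => false
               | y :: b' => dom b' (if x <= y then a' else a)
               end
  end.

Lemma dom_nil b : dom b [::] = true. Proof. by case: b. Qed.

Definition DomN (b a : seq nat) : Prop :=
  exists h : nat -> nat,
    (forall j1 j2, j1 < j2 -> j2 < size a -> h j1 < h j2) /\
    (forall j, j < size a -> h j < size b /\ nth 0 a j <= nth 0 b (h j)).

Lemma DomN_dom b a : DomN b a <-> dom b a.
Proof.
elim: b a => [|y b IH] [|x a] /=.
- split => // _; exists id; split => // j1 j2 _; by rewrite ltn0.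
- split => // -[h [_ H]]; have [] := H 0 (ltn0Sn _); by rewrite ltn0.
- split => // _; exists id; split => // j1 j2 _; by rewrite ltn0.
- split.
  + move=> [h [Hinc Hb]].
    have H0 := Hb 0 (ltn0Sn _).
    case: (leqP x y) => Hxy; apply/IH.
    * exists (fun j => (h j.+1).-1); split.
      - move=> j1 j2 H12 H2.
        have := Hinc j1.+1 j2.+1 H12 H2.
        have := Hinc 0 j1.+1 isT (ltn_trans H12 H2).
        lia.
      - move=> j Hj. have [Hb1 Hn1] := Hb j.+1 Hj.
        have := Hinc 0 j.+1 isT Hj.
        move: Hb1 Hn1; case: (h j.+1) => [|k] //=.
    * have Hh0 : 0 < h 0.
        move: H0; case: (h 0) => [|k] //= [_ Hx].
        by move: (leq_ltn_trans Hx Hxy); rewrite ltnn.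
      exists (fun j => (h j).-1); split.
      - move=> j1 j2 H12 H2.
        have := Hinc j1 j2 H12 H2.
        have : 0 < h j1.
          case: j1 H12 => [|j1] H12 //.
          exact: ltn_trans Hh0 (Hinc 0 j1.+1 isT (ltn_trans H12 H2)).
        lia.
      - move=> j Hj. have [Hb1 Hn1] := Hb j Hj.
        have : 0 < h j.
          case: j Hj {Hb1 Hn1} => [|j] Hj //.
          exact: ltn_trans Hh0 (Hinc 0 j.+1 isT Hj).
        move: Hb1 Hn1; case: (h j) => [|k] //=.
  + case: (leqP x y) => Hxy /IH [h [Hinc Hb]].
    * exists (fun j => if j is j'.+1 then (h j').+1 else 0); split.
      - move=> [|j1] [|j2] //= H12 H2. exact: Hinc.
      - move=> [|j] Hj /=; first by split.
        have [Hb1 Hn1] := Hb j Hj; by split.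
    * exists (fun j => (h j).+1); split.
      - move=> j1 j2 H12 H2. exact: Hinc.
      - move=> j Hj; have [Hb1 Hn1] := Hb j Hj; by split.
Qed.

Lemma dominatesP b a : reflect (DomN b a) (dominates b a).
Proof.
apply: (iffP existsP).
- move=> [f /andP[/forallP Hinc /forallP Hle]].
  pose h j := if (insub j : option 'I_(size a)) is Some o then val (f o) else 0.
  have hE (o : 'I_(size a)) : h o = f o by rewrite /h valK.
  exists h; split.
  + move=> j1 j2 H12 H2.
    have H1 : j1 < size a by exact: ltn_trans H12 H2.
    have := forallP (Hinc (Ordinal H1)) (Ordinal H2).
    rewrite /= H12 /= => H.
    by rewrite (hE (Ordinal H1)) (hE (Ordinal H2)).
  + move=> j Hj. rewrite (hE (Ordinal Hj)); split; first exact: ltn_ord.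
    exact: (Hle (Ordinal Hj)).
- move=> [h [Hinc Hb]].
  exists [ffun o : 'I_(size a) => Ordinal (proj1 (Hb o (ltn_ord o)))].
  apply/andP; split.
  + apply/forallP => j1; apply/forallP => j2; apply/implyP => H12.
    rewrite !ffunE /=. exact: Hinc.
  + apply/forallP => j; rewrite ffunE /=. exact: (proj2 (Hb j (ltn_ord j))).
Qed.

Fixpoint gk (b a : seq nat) {struct b} : option nat :=
  match a with
  | [::] => Some 0
  | x :: a' => match b with
               | [::] => None
               | y :: b' => omap S (gk b' (if x <= y then a' else a))
               end
  end.

Lemma gk_nil b : gk b [::] = Some 0. Proof. by case: b. Qed.

Lemma dom_cat b a t :
  dom b (a ++ t) = if gk b a is Some k then dom (drop k b) t else false.
Proof.
elim: b a => [|y b IH] [|x a] //=.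
case: (x <= y); rewrite ?IH -?cat_cons ?IH; by case: gk.
Qed.

Lemma gk_take b a k v : gk b a = Some k -> gk (take k b ++ v) a = Some k.
Proof.
elim: b a k => [|y b IH] [|x a] k //=; try by case=> <-; rewrite gk_nil.
case E: gk => [k'|] //= [<-] /=.
by rewrite (IH _ _ E).
Qed.

Lemma gk_size b a k : gk b a = Some k -> k <= size b.
Proof.
elim: b a k => [|y b IH] [|x a] k //=; try by case=> <-.
case E: gk => [k'|] //= [<-] /=.
exact: (IH _ _ E).
Qed.

Lemma dom_two v : dom v [:: 2] = has (leq 2) v.
Proof.
elim: v => [|y v IH] //=. case: (leqP 2 y) => H /=; first by rewrite dom_nil.
by rewrite IH.
Qed.

Lemma dom_one v : all (fun x => 0 < x) v -> dom v [:: 1] = (0 < size v).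
Proof. case: v => [|y v] //= /andP[Hy _]; by rewrite Hy dom_nil. Qed.

Lemma dom_11 v : all (fun x => 0 < x) v -> dom v [:: 1; 1] = (1 < size v).
Proof. case: v => [|y v] //= /andP[Hy Hv]; by rewrite Hy dom_one. Qed.

Definition psi (v : seq nat) : seq nat :=
  let m := sumn v in
  if (v == nseq m 1) && (0 < m) then [:: m]
  else if v == [:: m] then nseq m 1 else v.

Lemma ones v : all (fun x => 0 < x) v -> ~~ has (leq 2) v -> v = nseq (size v) 1.
Proof.
elim: v => [|y v IH] //= /andP[Hy Hv]; rewrite negb_or => /andP[Hy2 Hh].
rewrite -IH //; congr (_ :: _); lia.
Qed.

Lemma psi_ok v : all (fun x => 0 < x) v ->
  [/\ all (fun x => 0 < x) (psi v), sumn (psi v) = sumn v, psi (psi v) = v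
    & has (leq 2) v = (1 < size (psi v))].
Proof.
move=> Hv. rewrite /psi /=.
move Em: (sumn v) => m.
case: ifP => [/andP[/eqP Ev Hm] | HA].
  have Sm : sumn [:: m] = m by rewrite /= addn0.
  rewrite Sm Hm /=; split => //.
  - by rewrite andbT.
  - case: (ltngtP m 1) => Hm1.
    + lia.
    + have -> : ([:: m] == nseq m 1) = false.
        by apply/eqP => /(congr1 size); rewrite size_nseq /=; lia.
      by rewrite eqxx.
    + by rewrite Hm1 Ev Hm1.
  - by rewrite Ev has_nseq Hm.
case: ifP => [/eqP Ev | HB].
  have Hm2 : 1 < m.
    have Hm0 : 0 < m by move: Hv; rewrite Ev /= andbT.
    case: (ltngtP m 1) => Hm1 //; first lia.
    by move: HA; rewrite Ev Hm1.
  rewrite sumn_nseq mul1n eqxx (ltn_trans _ Hm2) //= all_nseq /= orbT size_nseq.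
  split => //. by rewrite Ev /= Hm2.
rewrite Em HA HB; split => //.
case: v Hv HA HB Em => [|y [|z u]] //=.
- by move=> _ _ HB Em; rewrite addn0 in Em; subst m; rewrite eqxx in HB.
- move=> Hv HA HB Em. apply: negbNE; apply/negP => Hn.
  have Ev := @ones [:: y, z & u] Hv Hn.
  have Hm : m = (size u).+2 by rewrite -Em; have := congr1 sumn Ev; rewrite sumn_nseq mul1n /= => ->.
  move: HA; rewrite Hm.
  by rewrite {1}Ev eqxx.
Qed.

Lemma count_invol (s : seq (seq nat)) (C P Q : pred (seq nat)) (phi : seq nat -> seq nat) :
  uniq s -> (forall b, C b -> b \in s) ->
  (forall b, C b -> [/\ C (phi b), phi (phi b) = b & P b = Q (phi b)]) ->
  count (fun b => C b && P b) s = count (fun b => C b && Q b) s.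
Proof.
move=> Us Cs H.
have E R : count (fun b => C b && R b) s = count R (filter C s).
  by rewrite count_filter; apply: eq_count => b; rewrite /= andbC.
rewrite !E.
set t := filter C s.
have Ct b : b \in t -> C b by rewrite mem_filter => /andP[].
have Hp : perm_eq (map phi t) t.
  apply: uniq_perm.
  - rewrite map_inj_in_uniq ?filter_uniq // => x y Hx Hy Exy.
    have [_ Hx2 _] := H x (Ct x Hx); have [_ Hy2 _] := H y (Ct y Hy).
    by rewrite -Hx2 Exy Hy2.
  - exact: filter_uniq.
  - move=> x; apply/mapP/idP.
    + move=> [y Hy ->]. have [Cy _ _] := H y (Ct y Hy).
      by rewrite mem_filter Cy Cs.
    + move=> Hx. have [Cx Hx2 _] := H x (Ct x Hx).
      exists (phi x); last by rewrite Hx2.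
      by rewrite mem_filter Cx Cs.
rewrite -[RHS](permP Hp) count_map.
apply: eq_in_count => b Hb /=.
by have [_ _ ->] := H b (Ct b Hb).
Qed.

Lemma mem_words L n w : size w = L -> all (fun x => 0 < x <= n) w -> w \in words_len L n.
Proof.
elim: L w => [|L IH] [|x w] //= [Hs] /andP[Hx Hw].
apply: (allpairs_f (fun x w => x :: w)); last exact: IH.
rewrite mem_iota; lia.
Qed.

Lemma size_words L n w : w \in words_len L n -> size w = L.
Proof.
elim: L w => [|L IH] w /=; first by rewrite inE => /eqP ->.
by move/allpairsP => [[x w'] [_ Hw ->]] /=; rewrite (IH _ Hw).
Qed.

Lemma uniq_words L n : uniq (words_len L n).
Proof.
elim: L => [|L IH] //=.
apply: allpairs_uniq => //; first exact: iota_uniq.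
by move=> [x w] [x' w'] _ _ /= [-> ->].
Qed.

Lemma uniq_flat n m k : uniq (flatten [seq words_len L n | L <- iota m k]).
Proof.
elim: k m => [|k IH] m //=.
rewrite cat_uniq uniq_words IH andbT.
apply/hasPn => w /flatten_mapP [L HL Hw].
apply/negP => /size_words Hs.
move: HL; rewrite mem_iota (size_words _ _ _ Hw) in Hs *; lia.
Qed.

Lemma size_le_sumn b : all (fun x => 0 < x) b -> size b <= sumn b.
Proof. elim: b => [|y b IH] //= /andP[Hy Hb]; have := IH Hb; lia. Qed.

Lemma mem_cands n b : all (fun x => 0 < x) b -> sumn b = n -> b \in cands n.
Proof.
move=> Hb Hs; apply/flatten_mapP; exists (size b).
  rewrite mem_iota /= ltnS -Hs. exact: size_le_sumn.
apply: mem_words => //.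
rewrite -Hs; elim: b Hb {Hs} => [|y b IH] //= /andP[Hy Hb].
rewrite Hy leq_addr /=.
apply: sub_all (IH Hb) => x /andP[-> Hx] /=; lia.
Qed.

Lemma domE b a : dominates b a = dom b a.
Proof. by apply/idP/idP => [/dominatesP/DomN_dom | /DomN_dom/dominatesP]. Qed.

Theorem lemma2p4 (a0 : seq nat) (n : nat) :
  is_composition (rcons a0 2) ->
  num_dominating n (rcons a0 2) = num_dominating n (a0 ++ [:: 1; 1]).
Proof.
move=> _.
have E a : num_dominating n a = count (fun b => (is_composition b && (sumn b == n)) && dominates b a) (cands n).
  by apply: eq_count => b; rewrite andbA.
rewrite !E.
pose phi b := if gk b a0 is Some k then take k b ++ psi (drop k b) else b.
apply: (@count_invol _ _ _ _ phi).
- rewrite /cands; exact: uniq_flat.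
- by move=> b /andP[Hb /eqP Hs]; apply: mem_cands.
move=> b /andP[Hb /eqP Hs].
rewrite /phi; case Eg: (gk b a0) => [k|]; last first.
  by rewrite Eg Hb Hs eqxx !domE -cats1 !dom_cat Eg.
have Hk := gk_size _ _ _ Eg.
set v := drop k b.
have Hbv : b = take k b ++ v by rewrite cat_take_drop.
have Hv : all (fun x => 0 < x) v by move: Hb; rewrite /is_composition {1}Hbv all_cat => /andP[].
have Ht : all (fun x => 0 < x) (take k b) by move: Hb; rewrite /is_composition {1}Hbv all_cat => /andP[].
have [Hp Hsum Hpp Hh] := psi_ok _ Hv.
have Stk : size (take k b) = k by rewrite size_take_min; apply/minn_idPl.
split.
- rewrite /is_composition all_cat Ht Hp sumn_cat Hsum -sumn_cat -Hbv Hs eqxx //.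
- by rewrite (gk_take _ _ _ _ Eg) (take_size_cat _ Stk) (drop_size_cat _ Stk) Hpp -Hbv.
- by rewrite !domE -cats1 !dom_cat Eg (gk_take _ _ _ _ Eg) (drop_size_cat _ Stk) dom_two dom_11.
Qed.
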